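(* Let $(G,O)$ be an equipped group such that the elements of $O$ generate $G$ and $O$ consists of a single conjugacy class, and let $\widehat G$ be the associated $C$-group. Then $\widehat G$ is isomorphic to a semidirect product $[\widehat G,\widehat G]\rtimes\mathbb Z$.
   Context: An equipped group is a pair $(G,O)$, $G$ a group, $O\subset G$ a union of finitely many conjugacy classes, $1\notin O$. The associated $C$-group $\widehat G$ (the $C$-group equivalent to $(G,O)$) is the group with generators $y_g$ ($g\in O$) and relations $y_h^{-1}y_gy_h=y_{h^{-1}gh}$ for all $g,h\in O$. *)

(* Defs.v *)
From Stdlib Require Import ZArith.

Record group := Group {
  carrier :> Type;
  gmul : carrier -> carrier -> carrier;
  ginv : carrier -> carrier;
  gone : carrier;
  gmulA : forall x y z, gmul x (gmul y z) = gmul (gmul x y) z;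
  gmul1l : forall x, gmul gone x = x;
  gmul1r : forall x, gmul x gone = x;
  gmulVl : forall x, gmul (ginv x) x = gone;
  gmulVr : forall x, gmul x (ginv x) = gone
}.

Arguments gmul {g}.
Arguments ginv {g}.
Arguments gone {g}.

Definition gconj {G : group} (x h : G) : G := gmul (ginv h) (gmul x h).

Definition gcomm {G : group} (a b : G) : G :=
  gmul (ginv a) (gmul (ginv b) (gmul a b)).

Fixpoint npow {G : group} (x : G) (n : nat) : G :=
  match n with O => gone | S m => gmul x (npow x m) end.

Definition zpow {G : group} (x : G) (z : Z) : G :=
  if (0 <=? z)%Z then npow x (Z.to_nat z) else ginv (npow x (Z.to_nat (- z))).

Definition is_hom {G H : group} (f : G -> H) : Prop :=
  forall x y, f (gmul x y) = gmul (f x) (f y).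

Definition is_iso {G H : group} (f : G -> H) : Prop :=
  is_hom f /\ (forall x y, f x = f y -> x = y) /\ (forall z, exists x, f x = z).

Definition subgroup_closed {G : group} (P : G -> Prop) : Prop :=
  P gone /\ (forall x y, P x -> P y -> P (gmul x y)) /\ (forall x, P x -> P (ginv x)).

Definition generated {G : group} (S : G -> Prop) (x : G) : Prop :=
  forall P : G -> Prop, subgroup_closed P -> (forall s, S s -> P s) -> P x.

Definition generates {G : group} (S : G -> Prop) : Prop :=
  forall x : G, generated S x.

Definition single_conj_class {G : group} (O : G -> Prop) : Prop :=
  exists g : G, g <> gone /\ forall x, O x <-> exists h : G, x = gconj g h.

Definition equipped_single {G : group} (O : G -> Prop) : Prop :=
  single_conj_class O.

Definition Crel {G H : group} (O : G -> Prop) (y : G -> H) : Prop :=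
  forall g h, O g -> O h -> gconj (y g) (y h) = y (gconj g h).

(* (H, y) is the C-group equivalent to (G,O): the group presented by
   generators y_g (g in O) and the relations above, characterised by its
   universal property (unique up to unique isomorphism).  Only the values
   of y on O are relevant. *)
Definition is_Cgroup {G : group} (O : G -> Prop) (H : group) (y : G -> H) : Prop :=
  Crel O y /\
  (forall (K : group) (z : G -> K), Crel O z ->
     exists f : H -> K, is_hom f /\ forall g, O g -> f (y g) = z g) /\
  (forall (K : group) (f1 f2 : H -> K), is_hom f1 -> is_hom f2 ->
     (forall g, O g -> f1 (y g) = f2 (y g)) -> forall x, f1 x = f2 x).

Definition comm_subgroup (H : group) (x : H) : Prop :=
  generated (fun c => exists a b : H, c = gcomm a b) x.

Definition normal_sub {H : group} (N : H -> Prop) : Prop :=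
  subgroup_closed N /\ forall x h, N x -> N (gconj x h).

Definition infinite_cyclic_sub {H : group} (Q : H -> Prop) : Prop :=
  exists t : H, (forall x, Q x <-> exists n : Z, x = zpow t n) /\
                (forall n : Z, zpow t n = gone -> n = 0%Z).

Definition semidirect {H : group} (N Q : H -> Prop) : Prop :=
  normal_sub N /\ subgroup_closed Q /\
  (forall x, N x -> Q x -> x = gone) /\
  (forall x, exists n q, N n /\ Q q /\ x = gmul n q).

(* Main.v *)
Require Import Defs.
From Stdlib Require Import ZArith Lia.
From Stdlib Require Import IndefiniteDescription ProofIrrelevance FunctionalExtensionality PropExtensionality.

Section GL.
Context {G : group}.
Implicit Types a b c x h k : G.

Lemma gcancel_l a x y : gmul a x = gmul a y -> x = y.
Proof. intro E. rewrite <- (gmul1l _ x), <- (gmul1l _ y), <- (gmulVl _ a), <- !gmulA, E. reflexivity. Qed.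

Lemma ginv_uniq a b : gmul a b = gone -> ginv a = b.
Proof. intro E. apply (gcancel_l a). rewrite gmulVr, E. reflexivity. Qed.

Lemma ginv_ginv a : ginv (ginv a) = a.
Proof. apply ginv_uniq. apply gmulVl. Qed.

Lemma ginv_one : ginv (gone : G) = gone.
Proof. apply ginv_uniq, gmul1l. Qed.

Lemma gmulKl a b : gmul (ginv a) (gmul a b) = b.
Proof. rewrite gmulA, gmulVl, gmul1l. reflexivity. Qed.
Lemma gmulKr a b : gmul a (gmul (ginv a) b) = b.
Proof. rewrite gmulA, gmulVr, gmul1l. reflexivity. Qed.

Lemma ginv_mul a b : ginv (gmul a b) = gmul (ginv b) (ginv a).
Proof. apply ginv_uniq. rewrite <- gmulA, gmulKr, gmulVr. reflexivity. Qed.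

Lemma gconj_one x : gconj x gone = x.
Proof. unfold gconj. rewrite ginv_one, gmul1l, gmul1r. reflexivity. Qed.

Lemma gconj_mul x h k : gconj x (gmul h k) = gconj (gconj x h) k.
Proof. unfold gconj. rewrite ginv_mul, !gmulA. reflexivity. Qed.

Lemma gconj_inv x h : gconj (gconj x (ginv h)) h = x.
Proof. rewrite <- gconj_mul, gmulVl, gconj_one. reflexivity. Qed.

Lemma gconj_comm x h : gconj x h = gmul x (gcomm x h).
Proof. unfold gconj, gcomm. rewrite gmulKr. reflexivity. Qed.

Lemma npow_succ_r x n : npow x (S n) = gmul (npow x n) x.
Proof.
  induction n as [|n IH]; simpl.
  - rewrite gmul1r, gmul1l. reflexivity.
  - simpl in IH. rewrite IH, gmulA, IH. reflexivity.
Qed.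

Variable t : G.

Lemma zpow_nonneg n : (0 <= n)%Z -> zpow t n = npow t (Z.to_nat n).
Proof. intro Hn. unfold zpow. destruct (Z.leb_spec 0 n); [reflexivity|lia]. Qed.

Lemma zpow_nonpos n : (n <= 0)%Z -> zpow t n = ginv (npow t (Z.to_nat (- n))).
Proof.
  intro Hn. unfold zpow. destruct (Z.leb_spec 0 n).
  - assert (n = 0%Z) by lia. subst. simpl. rewrite ginv_one. reflexivity.
  - reflexivity.
Qed.

Lemma zpow_succ n : zpow t (Z.succ n) = gmul (zpow t n) t.
Proof.
  destruct (Z_lt_le_dec n 0) as [Hn|Hn].
  - rewrite (zpow_nonpos n) by lia. rewrite (zpow_nonpos (Z.succ n)) by lia.
    replace (Z.to_nat (- n)) with (S (Z.to_nat (- Z.succ n))) by lia.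
    simpl. rewrite ginv_mul, <- gmulA, gmulVl, gmul1r. reflexivity.
  - rewrite !zpow_nonneg by lia. rewrite Z2Nat.inj_succ by lia. apply npow_succ_r.
Qed.

Lemma zpow_zero : zpow t 0 = gone.
Proof. reflexivity. Qed.

Lemma zpow_one : zpow t 1 = t.
Proof. unfold zpow; simpl. apply gmul1r. Qed.

Lemma zpow_pred n : zpow t (Z.pred n) = gmul (zpow t n) (ginv t).
Proof.
  rewrite <- (Z.succ_pred n) at 2. rewrite zpow_succ, <- gmulA, gmulVr, gmul1r. reflexivity.
Qed.

Lemma zpow_add (m p : Z) : zpow t (m + p) = gmul (zpow t m) (zpow t p).
Proof.
  induction p using Z.peano_ind.
  - rewrite Z.add_0_r, zpow_zero, gmul1r. reflexivity.
  - rewrite Z.add_succ_r, !zpow_succ, IHp, gmulA. reflexivity.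
  - rewrite Z.add_pred_r, !zpow_pred, IHp, gmulA. reflexivity.
Qed.

Lemma zpow_opp n : zpow t (- n) = ginv (zpow t n).
Proof.
  symmetry. apply ginv_uniq. rewrite <- zpow_add, Z.add_opp_diag_r. reflexivity.
Qed.

End GL.

Definition ZG : group := Group Z Z.add Z.opp 0%Z Z.add_assoc Z.add_0_l Z.add_0_r
  Z.add_opp_diag_l Z.add_opp_diag_r.

Lemma zpow_ZG n : zpow (G:=ZG) 1%Z n = n.
Proof.
  induction n using Z.peano_ind.
  - reflexivity.
  - rewrite zpow_succ, IHn. simpl. lia.
  - rewrite zpow_pred, IHn. simpl. lia.
Qed.

Section Hom.
Context {G K : group} (f : G -> K) (hf : is_hom f).

Lemma hom_one : f gone = gone.
Proof.
  apply (gcancel_l (f gone)). rewrite <- hf, !gmul1r. reflexivity.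
Qed.

Lemma hom_inv x : f (ginv x) = ginv (f x).
Proof. symmetry. apply ginv_uniq. rewrite <- hf, gmulVr. apply hom_one. Qed.

Lemma hom_zpow x n : f (zpow x n) = zpow (f x) n.
Proof.
  induction n using Z.peano_ind.
  - apply hom_one.
  - rewrite !zpow_succ, hf, IHn. reflexivity.
  - rewrite !zpow_pred, hf, IHn, hom_inv. reflexivity.
Qed.
End Hom.
Lemma gen_closed {G : group} (S : G -> Prop) : subgroup_closed (generated S).
Proof.
  split; [|split].
  - intros P [h1 _] _. exact h1.
  - intros x y hx hy P hP hS. destruct hP as [h1 [h2 h3]]. apply h2.
    + apply hx; [split; [|split]|]; assumption.
    + apply hy; [split; [|split]|]; assumption.
  - intros x hx P hP hS. destruct hP as [h1 [h2 h3]]. apply h3.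
    apply hx; [split; [|split]|]; assumption.
Qed.

Lemma gen_incl {G : group} (S : G -> Prop) s : S s -> generated S s.
Proof. intros hs P _ hS. apply hS, hs. Qed.

Section Quot.
Context {H : group} (N : H -> Prop) (hN : normal_sub N).

Definition cg (a b : H) := N (gmul a (ginv b)).

Lemma cg_refl a : cg a a.
Proof. unfold cg. rewrite gmulVr. apply hN. Qed.

Lemma cg_sym a b : cg a b -> cg b a.
Proof. unfold cg. intro h. apply hN in h. rewrite ginv_mul, ginv_ginv in h. exact h. Qed.

Lemma cg_trans a b c : cg a b -> cg b c -> cg a c.
Proof.
  unfold cg. intros h1 h2. pose proof (proj1 (proj2 (proj1 hN)) _ _ h1 h2) as h.
  rewrite <- gmulA, gmulKl in h. exact h.
Qed.

Lemma cg_mul a a' b b' : cg a a' -> cg b b' -> cg (gmul a b) (gmul a' b').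
Proof.
  unfold cg. intros h1 h2.
  pose proof (proj2 hN _ (ginv a) h2) as h3.
  pose proof (proj1 (proj2 (proj1 hN)) _ _ h3 h1) as h.
  unfold gconj in h. rewrite ginv_ginv in h.
  rewrite ginv_mul. rewrite <- !gmulA in h. rewrite gmulKl in h.
  rewrite !gmulA in h |- *. rewrite !gmulA in h. exact h.
Qed.

Lemma cg_inv a b : cg a b -> cg (ginv a) (ginv b).
Proof.
  unfold cg. intro h1. apply cg_sym in h1. unfold cg in h1.
  pose proof (proj2 hN _ a h1) as h. unfold gconj in h.
  rewrite ginv_ginv. rewrite <- !gmulA in h. rewrite gmulVl, gmul1r in h. exact h.
Qed.

Lemma cg_mulN a c : N c -> cg (gmul a c) a.
Proof.
  intro hc. rewrite <- (gmul1r _ a) at 2. apply cg_mul. apply cg_refl.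
  unfold cg. rewrite ginv_one, gmul1r. exact hc.
Qed.

Definition coset (a : H) : H -> Prop := fun z => cg a z.
Definition Qc := {S : H -> Prop | exists a, S = coset a}.
Definition pi (a : H) : Qc := exist _ (coset a) (ex_intro _ a eq_refl).

Lemma sig_eq (S T : Qc) : proj1_sig S = proj1_sig T -> S = T.
Proof. destruct S as [S p], T as [T q]; simpl. intros ->. f_equal. apply proof_irrelevance. Qed.

Lemma pi_eq a b : pi a = pi b <-> cg a b.
Proof.
  split.
  - intro E. apply (f_equal (@proj1_sig _ _)) in E. simpl in E.
    change (coset a b). rewrite E. apply cg_refl.
  - intro h. apply sig_eq. simpl. extensionality z. apply propositional_extensionality.
    unfold coset. split; intro h'.
    + apply (cg_trans _ a); [apply cg_sym|]; assumption.
    + apply (cg_trans _ b); assumption.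
Qed.

Lemma pi_surj (S : Qc) : exists a, S = pi a.
Proof. destruct S as [S [a E]]. exists a. apply sig_eq. simpl. exact E. Qed.

Definition rep (S : Qc) : H := proj1_sig (constructive_indefinite_description _ (pi_surj S)).
Lemma rep_spec S : S = pi (rep S).
Proof. unfold rep. destruct (constructive_indefinite_description _ _). simpl. exact e. Qed.

Definition qmul (S T : Qc) : Qc := pi (gmul (rep S) (rep T)).
Definition qinv (S : Qc) : Qc := pi (ginv (rep S)).
Definition qone : Qc := pi gone.

Lemma rep_cg a : cg (rep (pi a)) a.
Proof. apply pi_eq. symmetry. apply rep_spec. Qed.

Lemma qmul_pi a b : qmul (pi a) (pi b) = pi (gmul a b).
Proof. unfold qmul. apply pi_eq. apply cg_mul; apply rep_cg. Qed.

Lemma qinv_pi a : qinv (pi a) = pi (ginv a).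
Proof. unfold qinv. apply pi_eq. apply cg_inv, rep_cg. Qed.

Lemma qA x y z : qmul x (qmul y z) = qmul (qmul x y) z.
Proof.
  destruct (pi_surj x) as [a ->], (pi_surj y) as [b ->], (pi_surj z) as [c ->].
  rewrite !qmul_pi, gmulA. reflexivity.
Qed.
Lemma q1l x : qmul qone x = x.
Proof. destruct (pi_surj x) as [a ->]. unfold qone. rewrite qmul_pi, gmul1l. reflexivity. Qed.
Lemma q1r x : qmul x qone = x.
Proof. destruct (pi_surj x) as [a ->]. unfold qone. rewrite qmul_pi, gmul1r. reflexivity. Qed.
Lemma qVl x : qmul (qinv x) x = qone.
Proof. destruct (pi_surj x) as [a ->]. rewrite qinv_pi, qmul_pi, gmulVl. reflexivity. Qed.
Lemma qVr x : qmul x (qinv x) = qone.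
Proof. destruct (pi_surj x) as [a ->]. rewrite qinv_pi, qmul_pi, gmulVr. reflexivity. Qed.

Definition QG : group := Group Qc qmul qinv qone qA q1l q1r qVl qVr.

Lemma pi_hom : is_hom (G:=H) (H:=QG) pi.
Proof. intros a b. symmetry. apply qmul_pi. Qed.

End Quot.

Theorem proposition2p15 (G : group) (O : G -> Prop)
  (hO : equipped_single O) (hgen : generates O)
  (H : group) (y : G -> H) (hC : is_Cgroup O H y) :
  exists Q : H -> Prop, infinite_cyclic_sub Q /\ semidirect (comm_subgroup H) Q.
Proof.
  destruct hC as [hrel [huniv huniq]].
  destruct hO as [g0 [hg0 hOc]].
  destruct (huniv ZG (fun _ => 1%Z)) as [deg [hdeg hdeg1]].
  { intros g h _ _. unfold gconj. simpl. lia. }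
  set (t := y g0).
  set (N := comm_subgroup H).
  assert (hNc : subgroup_closed N) by apply gen_closed.
  assert (hN : normal_sub N).
  { split; [exact hNc|]. intros x h hx. rewrite gconj_comm.
    apply hNc; [exact hx|]. apply gen_incl. exists x, h. reflexivity. }
  assert (hdegN : forall x, N x -> deg x = 0%Z).
  { intros x hx. apply (hx (fun x => deg x = 0%Z)).
    - split; [|split].
      + apply (hom_one deg hdeg).
      + intros a b ha hb. rewrite hdeg. simpl. lia.
      + intros a ha. rewrite (hom_inv deg hdeg). simpl. lia.
    - intros c [a [b ->]]. unfold gcomm. rewrite !hdeg, !(hom_inv deg hdeg). simpl. lia. }
  assert (hO0 : O g0) by (apply hOc; exists gone; rewrite gconj_one; reflexivity).
  assert (hOconj : forall g h, O g -> O (gconj g h)).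
  { intros g h hg. apply hOc in hg. destruct hg as [k ->]. apply hOc.
    exists (gmul k h). rewrite gconj_mul. reflexivity. }
  assert (hcong : forall g, O g -> pi N (y g) = pi N t).
  { set (P := fun h => forall g, O g -> pi N (y (gconj g h)) = pi N (y g)).
    assert (hP : forall h, P h).
    { intro h. apply (hgen h).
      - split; [|split].
        + intros g _. rewrite gconj_one. reflexivity.
        + intros a b ha hb g hg. rewrite gconj_mul, hb by (apply hOconj; exact hg).
          apply ha, hg.
        + intros a ha g hg. symmetry.
          rewrite <- (gconj_inv g a) at 1. apply ha. apply hOconj, hg.
      - intros h0 hh g hg. rewrite <- hrel by assumption. apply pi_eq; [exact hN|].
        rewrite gconj_comm. apply cg_mulN; [exact hN|]. apply gen_incl.
        eexists; eexists; reflexivity. }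
    intros g hg. apply hOc in hg. destruct hg as [h ->]. apply hP, hO0. }
  assert (hdec : forall x, N (gmul x (ginv (zpow t (deg x))))).
  { intro x. apply (pi_eq N hN).
    apply (huniq (QG N hN) (pi N) (fun x => pi N (zpow t (deg x)))).
    - apply pi_hom.
    - intros a b. rewrite hdeg. simpl. rewrite zpow_add. symmetry. apply qmul_pi, hN.
    - intros g hg. rewrite hcong, hdeg1, zpow_one by exact hg. reflexivity. }
  assert (hdegz : forall n, deg (zpow t n) = n).
  { intro n. rewrite (hom_zpow deg hdeg). unfold t. rewrite hdeg1 by exact hO0.
    apply zpow_ZG. }
  exists (fun x => exists n, x = zpow t n). split.
  - exists t. split; [tauto|]. intros n E. apply (f_equal deg) in E.
    rewrite hdegz, (hom_one deg hdeg) in E. exact E.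
  - split; [exact hN|]. split; [|split].
    + split; [|split].
      * exists 0%Z. reflexivity.
      * intros a b [m ->] [p ->]. exists (m + p)%Z. symmetry. apply zpow_add.
      * intros a [m ->]. exists (- m)%Z. symmetry. apply zpow_opp.
    + intros x hx [n ->]. apply hdegN in hx. rewrite hdegz in hx. subst. reflexivity.
    + intro x. exists (gmul x (ginv (zpow t (deg x)))), (zpow t (deg x)).
      split; [apply hdec|]. split; [eexists; reflexivity|].
      rewrite <- gmulA, gmulVl, gmul1r. reflexivity.
Qed.
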